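(* Let $\alpha_a$ be a labeled dGL hybrid game, $\varphi$ a dGL formula, and $S$ an Angelic subvalue map for $\alpha_a$ compatible with $\varphi$, i.e. $\models S(b)\rightarrow\langle \mathrm{suffix}_b(\alpha_a)\rangle S(\mathsf{end})$ for every $b\in\mathrm{nodes}(\alpha_a)$ and $\models S(\mathsf{end})\rightarrow\varphi$. Then for every subgame label $b\in\mathrm{nodes}(\alpha_a)$, every state satisfying $S(a)$ satisfies $$\big\langle \mathrm{prefix}_b(\mathcal{U}(\alpha_a,S))\big\rangle\,\big\langle \mathrm{suffix}_b(\alpha_a)\big\rangle\,\varphi .$$
   Context: Differential game logic (dGL). Hybrid games are generated by $\alpha,\beta ::= x:=e \mid \alpha;\beta \mid ?Q \mid \{x'=f(x)\,\&\,Q\} \mid \alpha^{*} \mid \alpha\cup\beta \mid x:=* \mid\ !Q \mid \{x'=f(x)\,\&\,Q\}^{d} \mid \alpha^{\times} \mid \alpha\cap\beta \mid x:=\otimes$, with $x$ a real variable (vector for ODEs), $e,f(x)$ polynomial terms, $Q$ a formula. Players Angel and Demon: $x:=e$ deterministic assignment; in $x:=*$ Angel (in $x:=\otimes$ Demon) assigns any real to $x$; in $\{x'=f(x)\&Q\}$ Angel (in $\{x'=f(x)\&Q\}^d$ Demon) chooses a duration $r\ge 0$ of following the ODE with $Q$ true throughout; $?Q$ makes Angel lose and $!Q$ makes Demon lose if $Q$ is false (no effect otherwise); in $\alpha\cup\beta$ Angel (in $\alpha\cap\beta$ Demon) chooses the branch; in $\alpha^*$ Angel (in $\alpha^\times$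 Demon) decides before each iteration whether to repeat $\alpha$ or stop; $\alpha;\beta$ is sequential composition. $\mathrm{skip}$ denotes $?\mathit{true}$. Formulas: polynomial (in)equalities closed under connectives, real quantifiers, and modalities $\langle\alpha\rangle\varphi$ (Angel has a winning strategy in $\alpha$ to reach $\varphi$ whatever Demon does) and $[\alpha]\varphi\equiv\neg\langle\alpha\rangle\neg\varphi$, with the standard dGL semantics: $\langle x:=e\rangle\varphi\leftrightarrow\varphi(x\mapsto e)$, $\langle x:=*\rangle\varphi\leftrightarrow\exists x\varphi$, $\langle x:=\otimes\rangle\varphi\leftrightarrow\forall x\varphi$, $\langle ?Q\rangle\varphi\leftrightarrow Q\wedge\varphi$, $\langle !Q\rangle\varphi\leftrightarrow(Q\rightarrow\varphi)$, $\langle\alpha\cup\beta\rangle\varphi\leftrightarrow\langle\alpha\rangle\varphi\vee\langle\beta\rangle\varphi$, $\langle\alpha\cap\beta\rangle\varphi\leftrightarrow\langle\alpha\rangle\varphi\wedge\langle\beta\rangle\varphi$, $\langle\alpha;\beta\rangle\varphi\leftrightarrow\langle\alpha\rangle\langle\beta\rangle\varphi$; the Angel ODE holds iff some solution of some duration $r\ge0$ staying in $Q$ ends in $\varphi$, the Demon ODE iff all such solutions end in $\varphi$; $\langle\alpha^*\rangle\varphi$ denotes the least set $Z$ of states with $[\![\varphi]\!]\cup\varsigma_\alpha(Z)\subseteq Z$ and $\langle\alpha^\times\rangle\varphi$ the greatest $Z$ with $Z\subseteq[\![\varphi]\!]\cap\varsigma_\alpha(Z)$, where $\varsigma_\alpha(Z)$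 is Angel's winning region in $\alpha$ for goal $Z$. $\models\psi$ means $\psi$ is valid. Labels. Every node of the syntax tree of a game carries a unique label (equal subgames at different positions get different labels). $\alpha_a$ is a game whose root has label $a$; $\mathrm{nodes}(\alpha_a)$ is the set of labels of its subgames (including $a$). A special label $\mathsf{end}\notin\mathrm{nodes}(\alpha_a)$ is used. A map $S$ assigns formulas to a set of labels containing $\mathrm{nodes}(\alpha_a)\cup\{\mathsf{end}\}$; $S\{\mathsf{end}\mapsto Q\}$ is $S$ with the value at $\mathsf{end}$ replaced by $Q$. Below $\gamma_g,\delta_d$ denote immediate subgames with root labels $g,d$. Game suffix $\mathrm{suffix}_b(\alpha_a)$ for $b\in\mathrm{nodes}(\alpha_a)$: if $b=a$, it is $\alpha_a$. Otherwise: for $\alpha_a=((\gamma_g)^* )_a$ or $((\gamma_g)^\times)_a$ it is $\mathrm{suffix}_b(\gamma_g);\alpha_a$; for $(\gamma_g\cup\delta_d)_a$ or $(\gamma_g\cap\delta_d)_a$ it is $\mathrm{suffix}_b(\gamma_g)$ if $b\in\mathrm{nodes}(\gamma_g)$ and $\mathrm{suffix}_b(\delta_d)$ otherwise; for $(\gamma_g;\delta_d)_a$ it is $\mathrm{suffix}_b(\gamma_g);\delta_d$ if $b\in\mathrm{nodes}(\gamma_g)$ and $\mathrm{suffix}_b(\delta_d)$ otherwise. Game prefix $\mathrm{prefix}_b(\alpha_a)$ for $b\in\mathrm{nodes}(\alpha_a)$: if $b=a$ and $\alpha$ is not a loop, it is $\mathrm{skip}$; if $b=a$ and $\alpha$ is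 a loop ($^*$ or $^\times$), it is $\alpha_a$. Otherwise: for loops $((\gamma_g)^* )_a$, $((\gamma_g)^\times)_a$ it is $\alpha_a;\mathrm{prefix}_b(\gamma_g)$; for $\cup,\cap$ it is the prefix within the branch containing $b$; for $(\gamma_g;\delta_d)_a$ it is $\mathrm{prefix}_b(\gamma_g)$ if $b\in\mathrm{nodes}(\gamma_g)$ and $\gamma_g;\mathrm{prefix}_b(\delta_d)$ otherwise. Angelic subvalue map: a map $S$ with $\models S(b)\rightarrow\langle\mathrm{suffix}_b(\alpha_a)\rangle S(\mathsf{end})$ for all $b\in\mathrm{nodes}(\alpha_a)$; it is compatible with $\varphi$ if $\models S(\mathsf{end})\rightarrow\varphi$. Universal projection $\mathcal{U}(\alpha_a,S)$, defined recursively: $(x:=* )_a\mapsto (x:=\otimes)_a;\,!S(\mathsf{end})$; $\{x'=f(x)\&Q\}_a\mapsto(\{x'=f(x)\&Q\}^d)_a;\,!S(\mathsf{end})$; $(\gamma_g\cup\delta_d)_a\mapsto(!S(g);\mathcal{U}(\gamma_g,S))\cap_a(!S(d);\mathcal{U}(\delta_d,S))$; $((\gamma_g)^* )_a\mapsto\big((!S(g);\mathcal{U}(\gamma_g,S\{\mathsf{end}\mapsto S(a)\}))^{\times}\big)_a;\,!S(\mathsf{end})$; $(\gamma_g;\delta_d)_a\mapsto\mathcal{U}(\gamma_g,S\{\mathsf{end}\mapsto S(d)\});_a\,\mathcal{U}(\delta_d,S)$; $(\gamma_g\cap\delta_d)_a\mapsto\mathcal{U}(\gamma_g,S)\cap_a\mathcal{U}(\delta_d,S)$;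 $((\gamma_g)^\times)_a\mapsto(\mathcal{U}(\gamma_g,S\{\mathsf{end}\mapsto S(a)\})^\times)_a$; $x:=e$, $x:=\otimes$, $?Q$, $!Q$, $\{x'=f(x)\&Q\}^d$ are left unchanged. Labels are preserved (the node replacing the node labeled $a$, e.g. the Demon counterpart $x:=\otimes$, the dual ODE, $\cap$, or the loop $^\times$, keeps label $a$; subgames keep their labels) and newly introduced nodes get fresh labels. *)

(* Defs.v *)
From Stdlib Require Import Reals QArith Qreals List.
From Coquelicot Require Import Coquelicot.
Open Scope R_scope.

(* Labels of input games are natural numbers [LBase n]; [LFresh a k] are the
   fresh labels introduced by the universal projection at the node labelled a
   (k-th new node); [LEnd] is the special label end. *)
Inductive label : Type :=
| LBase (n : nat)
| LFresh (a : label) (k : nat)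
| LEnd.

Definition label_eq_dec : forall l1 l2 : label, {l1 = l2} + {l1 <> l2}.
Proof. decide equality; apply Nat.eq_dec. Defined.

Definition var := nat.

Inductive term : Type :=
| TVar (x : var)
| TConst (q : Q)
| TNeg (e : term)
| TPlus (e1 e2 : term)
| TTimes (e1 e2 : term).

Inductive formula : Type :=
| FTrue
| FFalse
| FEq (e1 e2 : term)
| FLe (e1 e2 : term)
| FLt (e1 e2 : term)
| FNot (p : formula)
| FAnd (p q : formula)
| FOr (p q : formula)
| FImp (p q : formula)
| FForall (x : var) (p : formula)
| FExists (x : var) (p : formula)
| FDia (g : game) (p : formula)
| FBox (g : game) (p : formula)
with game : Type :=
| GAsgn (a : label) (x : var) (e : term)
| GAsgnA (a : label) (x : var)
| GAsgnD (a : label) (x : var)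
| GTest (a : label) (Q : formula)
| GDTest (a : label) (Q : formula)
| GODE (a : label) (ode : list (var * term)) (Q : formula)
| GODED (a : label) (ode : list (var * term)) (Q : formula)
| GSeq (a : label) (g1 g2 : game)
| GChoice (a : label) (g1 g2 : game)
| GDChoice (a : label) (g1 g2 : game)
| GStar (a : label) (g : game)
| GCross (a : label) (g : game).

Definition state := var -> R.

Definition upd (s : state) (x : var) (v : R) : state :=
  fun y => if Nat.eq_dec y x then v else s y.

Fixpoint tsem (e : term) (s : state) : R :=
  match e with
  | TVar x => s x
  | TConst q => Q2R q
  | TNeg e => - tsem e s
  | TPlus e1 e2 => tsem e1 s + tsem e2 s
  | TTimes e1 e2 => tsem e1 s * tsem e2 s
  end.

Definition ode_sol (ode : list (var * term)) (Q : state -> Prop)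
  (s : state) (r : R) (phi : R -> state) : Prop :=
  0 <= r /\ phi 0 = s /\
  (forall t, 0 <= t <= r -> forall y, ~ In y (map fst ode) -> phi t y = s y) /\
  (forall t, 0 <= t <= r -> forall x e, In (x, e) ode ->
       is_derive (fun tau => phi tau x) t (tsem e (phi t))) /\
  (forall t, 0 <= t <= r -> Q (phi t)).

Fixpoint fsem (p : formula) (s : state) {struct p} : Prop :=
  match p with
  | FTrue => True
  | FFalse => False
  | FEq e1 e2 => tsem e1 s = tsem e2 s
  | FLe e1 e2 => tsem e1 s <= tsem e2 s
  | FLt e1 e2 => tsem e1 s < tsem e2 s
  | FNot p => ~ fsem p s
  | FAnd p q => fsem p s /\ fsem q s
  | FOr p q => fsem p s \/ fsem q s
  | FImp p q => fsem p s -> fsem q s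
  | FForall x p => forall v, fsem p (upd s x v)
  | FExists x p => exists v, fsem p (upd s x v)
  | FDia g p => win g (fsem p) s
  | FBox g p => ~ win g (fun t => ~ fsem p t) s
  end
with win (g : game) (X : state -> Prop) (s : state) {struct g} : Prop :=
  match g with
  | GAsgn _ x e => X (upd s x (tsem e s))
  | GAsgnA _ x => exists v, X (upd s x v)
  | GAsgnD _ x => forall v, X (upd s x v)
  | GTest _ Q => fsem Q s /\ X s
  | GDTest _ Q => fsem Q s -> X s
  | GODE _ ode Q => exists r phi, ode_sol ode (fsem Q) s r phi /\ X (phi r)
  | GODED _ ode Q => forall r phi, ode_sol ode (fsem Q) s r phi -> X (phi r)
  | GSeq _ g1 g2 => win g1 (win g2 X) s
  | GChoice _ g1 g2 => win g1 X s \/ win g2 X s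
  | GDChoice _ g1 g2 => win g1 X s /\ win g2 X s
  | GStar _ g1 =>   (* least Z with X u varsigma_g1(Z) <= Z *)
      forall Z : state -> Prop, (forall t, X t \/ win g1 Z t -> Z t) -> Z s
  | GCross _ g1 =>  (* greatest Z with Z <= X n varsigma_g1(Z) *)
      exists Z : state -> Prop, Z s /\ (forall t, Z t -> X t /\ win g1 Z t)
  end.

Definition valid (p : formula) : Prop := forall s, fsem p s.

Definition lab (g : game) : label :=
  match g with
  | GAsgn a _ _ | GAsgnA a _ | GAsgnD a _ | GTest a _ | GDTest a _
  | GODE a _ _ | GODED a _ _ | GSeq a _ _ | GChoice a _ _ | GDChoice a _ _
  | GStar a _ | GCross a _ => a
  end.

Fixpoint nodes (g : game) : list label :=
  match g with
  | GSeq a g1 g2 | GChoice a g1 g2 | GDChoice a g1 g2 => a :: nodes g1 ++ nodes g2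
  | GStar a g1 | GCross a g1 => a :: nodes g1
  | _ => lab g :: nil
  end.

(* Label used for the (semantically irrelevant) auxiliary nodes built by
   suffix / prefix. *)
Definition aux_label : label := LEnd.

Definition skip : game := GTest aux_label FTrue.

Fixpoint suffix (b : label) (g : game) : game :=
  if label_eq_dec b (lab g) then g else
  match g with
  | GStar _ g1 | GCross _ g1 => GSeq aux_label (suffix b g1) g
  | GChoice _ g1 g2 | GDChoice _ g1 g2 =>
      if in_dec label_eq_dec b (nodes g1) then suffix b g1 else suffix b g2
  | GSeq _ g1 g2 =>
      if in_dec label_eq_dec b (nodes g1) then GSeq aux_label (suffix b g1) g2
      else suffix b g2
  | _ => g
  end.

Fixpoint prefix (b : label) (g : game) : game :=
  if label_eq_dec b (lab g) then
    match g with
    | GStar _ _ | GCross _ _ => g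
    | _ => skip
    end
  else
  match g with
  | GStar _ g1 | GCross _ g1 => GSeq aux_label g (prefix b g1)
  | GChoice _ g1 g2 | GDChoice _ g1 g2 =>
      if in_dec label_eq_dec b (nodes g1) then prefix b g1 else prefix b g2
  | GSeq _ g1 g2 =>
      if in_dec label_eq_dec b (nodes g1) then prefix b g1
      else GSeq aux_label g1 (prefix b g2)
  | _ => skip
  end.

Definition setEnd (S : label -> formula) (Q : formula) : label -> formula :=
  fun l => if label_eq_dec l LEnd then Q else S l.

Definition angelic_subvalue_map (g : game) (S : label -> formula) : Prop :=
  forall b, In b (nodes g) -> valid (FImp (S b) (FDia (suffix b g) (S LEnd))).

Definition compatible (S : label -> formula) (phi : formula) : Prop :=
  valid (FImp (S LEnd) phi).

Fixpoint uproj (g : game) (S : label -> formula) : game :=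
  match g with
  | GAsgnA a x =>
      GSeq (LFresh a 0) (GAsgnD a x) (GDTest (LFresh a 1) (S LEnd))
  | GODE a ode Q =>
      GSeq (LFresh a 0) (GODED a ode Q) (GDTest (LFresh a 1) (S LEnd))
  | GChoice a g1 g2 =>
      GDChoice a
        (GSeq (LFresh a 0) (GDTest (LFresh a 1) (S (lab g1))) (uproj g1 S))
        (GSeq (LFresh a 2) (GDTest (LFresh a 3) (S (lab g2))) (uproj g2 S))
  | GStar a g1 =>
      GSeq (LFresh a 0)
        (GCross a (GSeq (LFresh a 1) (GDTest (LFresh a 2) (S (lab g1)))
                        (uproj g1 (setEnd S (S a)))))
        (GDTest (LFresh a 3) (S LEnd))
  | GSeq a g1 g2 => GSeq a (uproj g1 (setEnd S (S (lab g2)))) (uproj g2 S)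
  | GDChoice a g1 g2 => GDChoice a (uproj g1 S) (uproj g2 S)
  | GCross a g1 => GCross a (uproj g1 (setEnd S (S a)))
  | _ => g
  end.

(* well-labelled input game: unique labels, all drawn from the base label set
   (so in particular end and the fresh labels do not occur). *)
Definition well_labelled (g : game) : Prop :=
  NoDup (nodes g) /\ forall l, In l (nodes g) -> exists n, l = LBase n.

(* Main.v *)
Require Import Defs.
From Stdlib Require Import Reals List.

Lemma win_mono : forall g (X Y : state -> Prop), (forall t, X t -> Y t) ->
  forall s, win g X s -> win g Y s.
Proof.
  induction g; intros X Y HXY s H; simpl in *; try firstorder.
Qed.

Definition wl := well_labelled.

Lemma wl_bin : forall a l1 l2, NoDup (a :: l1 ++ l2) /\ (forall l, In l (a :: l1 ++ l2) -> exists n, l = LBase n) ->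
  (NoDup l1 /\ (forall l, In l l1 -> exists n, l = LBase n)) /\
  (NoDup l2 /\ (forall l, In l l2 -> exists n, l = LBase n)) /\
  ~ In a l1 /\ ~ In a l2 /\ exists n, a = LBase n.
Proof.
  intros a l1 l2 [H1 H2]. apply NoDup_cons_iff in H1 as [Hn Hd].
  repeat split.
  - eapply NoDup_app_remove_r; eauto.
  - intros; apply H2; simpl; rewrite in_app_iff; auto.
  - eapply NoDup_app_remove_l; eauto.
  - intros; apply H2; simpl; rewrite in_app_iff; auto.
  - intro; apply Hn; rewrite in_app_iff; auto.
  - intro; apply Hn; rewrite in_app_iff; auto.
  - apply H2; simpl; auto.
Qed.

Lemma wl_un : forall a l1, NoDup (a :: l1) /\ (forall l, In l (a :: l1) -> exists n, l = LBase n) ->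
  (NoDup l1 /\ (forall l, In l l1 -> exists n, l = LBase n)) /\
  ~ In a l1 /\ exists n, a = LBase n.
Proof.
  intros a l1 [H1 H2]. apply NoDup_cons_iff in H1 as [Hn Hd].
  repeat split; auto.
  - intros; apply H2; simpl; auto.
  - apply H2; simpl; auto.
Qed.

Lemma lab_in : forall g, In (lab g) (nodes g).
Proof. destruct g; simpl; auto. Qed.

Lemma suffix_lab : forall g, suffix (lab g) g = g.
Proof. destruct g; simpl; destruct label_eq_dec; congruence. Qed.

Lemma setEnd_base : forall S Q n, setEnd S Q (LBase n) = S (LBase n).
Proof. intros; unfold setEnd; destruct label_eq_dec; congruence. Qed.

Lemma uproj_nodes : forall g S n, In (LBase n) (nodes (uproj g S)) <-> In (LBase n) (nodes g).
Proof.
  induction g; intros S n; simpl; repeat rewrite in_app_iff; simpl;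
  repeat rewrite in_app_iff;
  try rewrite IHg1; try rewrite IHg2; try rewrite IHg;
  intuition congruence.
Qed.

Lemma NoDup_disj {A} : forall (l1 l2 : list A) x, NoDup (l1 ++ l2) -> In x l1 -> ~ In x l2.
Proof.
  induction l1; simpl; intros l2 x H Hx; [tauto|].
  apply NoDup_cons_iff in H as [Hn Hd]. destruct Hx as [<-|Hx].
  - intro; apply Hn; rewrite in_app_iff; auto.
  - eapply IHl1; eauto.
Qed.

Lemma wl_bin' : forall a g1 g2, NoDup (a :: nodes g1 ++ nodes g2) /\ (forall l, In l (a :: nodes g1 ++ nodes g2) -> exists n, l = LBase n) ->
  wl g1 /\ wl g2 /\ ~ In a (nodes g1) /\ ~ In a (nodes g2) /\ (exists n, a = LBase n)
  /\ (forall x, In x (nodes g1) -> ~ In x (nodes g2)).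
Proof.
  intros a g1 g2 H. pose proof (wl_bin _ _ _ H) as (W1&W2&N1&N2&B).
  repeat split; auto; try apply W1; try apply W2.
  intros x Hx. destruct H as [H _]. apply NoDup_cons_iff in H as [_ H].
  eapply NoDup_disj; eauto.
Qed.

Ltac sufcomp := intros; simpl; destruct label_eq_dec; [congruence|];
  try (destruct in_dec; [reflexivity || tauto | reflexivity || tauto]); reflexivity.

Lemma suf_seq1 : forall b a g1 g2, In b (nodes g1) -> b <> a -> suffix b (GSeq a g1 g2) = GSeq aux_label (suffix b g1) g2.
Proof. sufcomp. Qed.
Lemma suf_seq2 : forall b a g1 g2, ~ In b (nodes g1) -> b <> a -> suffix b (GSeq a g1 g2) = suffix b g2.
Proof. sufcomp. Qed.
Lemma suf_ch1 : forall b a g1 g2, In b (nodes g1) -> b <> a -> suffix b (GChoice a g1 g2) = suffix b g1.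
Proof. sufcomp. Qed.
Lemma suf_ch2 : forall b a g1 g2, ~ In b (nodes g1) -> b <> a -> suffix b (GChoice a g1 g2) = suffix b g2.
Proof. sufcomp. Qed.
Lemma suf_dch1 : forall b a g1 g2, In b (nodes g1) -> b <> a -> suffix b (GDChoice a g1 g2) = suffix b g1.
Proof. sufcomp. Qed.
Lemma suf_dch2 : forall b a g1 g2, ~ In b (nodes g1) -> b <> a -> suffix b (GDChoice a g1 g2) = suffix b g2.
Proof. sufcomp. Qed.
Lemma suf_star : forall b a g1, b <> a -> suffix b (GStar a g1) = GSeq aux_label (suffix b g1) (GStar a g1).
Proof. sufcomp. Qed.
Lemma suf_cross : forall b a g1, b <> a -> suffix b (GCross a g1) = GSeq aux_label (suffix b g1) (GCross a g1).
Proof. sufcomp. Qed.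

Lemma neq_of : forall b a (l : list label), In b l -> ~ In a l -> b <> a.
Proof. intros; intro; subst; auto. Qed.

Lemma M : forall g S Kc, wl g ->
  (forall b, In b (nodes g) -> forall t, fsem (S b) t -> win (suffix b g) Kc t) ->
  (forall t, fsem (S LEnd) t -> Kc t) ->
  forall s, win g Kc s -> win (uproj g S) Kc s.
Proof.
  induction g; intros S Kc Hwl H1 H2 s Hs; simpl uproj; try exact Hs.
  - simpl; intros v Hv; auto.
  - simpl; intros r ph _ Hv; auto.
  -
    destruct (wl_bin' _ _ _ Hwl) as (W1&W2&N1&N2&[na ->]&D).
    simpl. apply win_mono with (X := win g2 Kc).
    + intros t Ht. apply IHg2; auto.
      intros b Hb t' Ht'. rewrite <- suf_seq2 with (a := LBase na) (g1 := g1).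
      * apply H1; try (simpl; rewrite in_app_iff); auto.
      * intro; eapply D; eauto.
      * eapply neq_of; eauto.
    + apply IHg1; auto.
      * intros b Hb t Ht. destruct (proj2 W1 b Hb) as [nb ->]. rewrite setEnd_base in Ht.
        change (win (GSeq aux_label (suffix (LBase nb) g1) g2) Kc t).
        rewrite <- suf_seq1 with (a := LBase na); [|auto|eapply neq_of; eauto].
        apply H1; try (simpl; rewrite in_app_iff); auto.
      * intros t Ht. unfold setEnd in Ht; simpl in Ht.
        rewrite <- (suffix_lab g2). rewrite <- suf_seq2 with (a := LBase na) (g1 := g1).
        -- apply H1; [simpl; rewrite in_app_iff; right; right; apply lab_in | auto].
        -- intro HH; exact (D _ HH (lab_in _)).
        -- eapply neq_of; [apply lab_in | eauto].
  -
    destruct (wl_bin' _ _ _ Hwl) as (W1&W2&N1&N2&[na ->]&D).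
    simpl. split.
    + intros HS. apply IHg1; auto.
      * intros b Hb t Ht. rewrite <- suf_ch1 with (a := LBase na) (g2 := g2); [|auto|eapply neq_of; eauto].
        apply H1; try (simpl; rewrite in_app_iff); auto.
      * rewrite <- (suffix_lab g1). rewrite <- suf_ch1 with (a := LBase na) (g2 := g2).
        -- apply H1; [simpl; rewrite in_app_iff; right; left; apply lab_in | auto].
        -- apply lab_in.
        -- eapply neq_of; [apply lab_in | eauto].
    + intros HS. apply IHg2; auto.
      * intros b Hb t Ht. rewrite <- suf_ch2 with (a := LBase na) (g1 := g1); [| intro; eapply D; eauto |eapply neq_of; eauto].
        apply H1; try (simpl; rewrite in_app_iff); auto.
      * rewrite <- (suffix_lab g2). rewrite <- suf_ch2 with (a := LBase na) (g1 := g1).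
        -- apply H1; [simpl; rewrite in_app_iff; right; right; apply lab_in | auto].
        -- intro HH; exact (D _ HH (lab_in _)).
        -- eapply neq_of; [apply lab_in | eauto].
  -
    destruct (wl_bin' _ _ _ Hwl) as (W1&W2&N1&N2&[na ->]&D).
    simpl in Hs |- *. destruct Hs as [Hs1 Hs2]. split.
    + apply IHg1; auto.
      intros b Hb t Ht. rewrite <- suf_dch1 with (a := LBase na) (g2 := g2); [|auto|eapply neq_of; eauto].
      apply H1; try (simpl; rewrite in_app_iff); auto.
    + apply IHg2; auto.
      intros b Hb t Ht. rewrite <- suf_dch2 with (a := LBase na) (g1 := g1); [| intro; eapply D; eauto |eapply neq_of; eauto].
      apply H1; try (simpl; rewrite in_app_iff); auto.
  -
    destruct (wl_un _ _ Hwl) as (W1&N1&[na ->]).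
    simpl. exists (win (GStar (LBase na) g) Kc). split; [exact Hs|].
    intros t Ht. split; [intros HE; auto|].
    intros HS. apply win_mono with (X := win (GStar (LBase na) g) Kc); [auto|].
    apply IHg; auto.
    + intros b Hb t' Ht'. destruct (proj2 W1 b Hb) as [nb ->]. rewrite setEnd_base in Ht'.
      change (win (GSeq aux_label (suffix (LBase nb) g) (GStar (LBase na) g)) Kc t').
      rewrite <- suf_star; [|eapply neq_of; eauto]. apply H1; simpl; auto.
    + intros t' Ht'. unfold setEnd in Ht'; simpl in Ht'.
      pose proof (H1 (LBase na) (or_introl eq_refl) t' Ht') as Hw.
      rewrite <- (suffix_lab (GStar (LBase na) g)). exact Hw.
    + pose proof (H1 (lab g) (or_intror (lab_in g)) t HS) as Hw.
      rewrite suf_star in Hw; [|eapply neq_of; [apply lab_in | eauto]].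
      simpl in Hw; rewrite suffix_lab in Hw; exact Hw.
  -
    destruct (wl_un _ _ Hwl) as (W1&N1&[na ->]).
    simpl. exists (win (GCross (LBase na) g) Kc). split; [exact Hs|].
    intros t Ht. destruct Ht as [Z [HZt HZ]]. split; [apply (HZ t HZt)|].
    apply IHg; auto.
    + intros b Hb t' Ht'. destruct (proj2 W1 b Hb) as [nb ->]. rewrite setEnd_base in Ht'.
      change (win (GSeq aux_label (suffix (LBase nb) g) (GCross (LBase na) g)) Kc t').
      rewrite <- suf_cross; [|eapply neq_of; eauto]. apply H1; simpl; auto.
    + intros t' Ht'. unfold setEnd in Ht'; simpl in Ht'.
      pose proof (H1 (LBase na) (or_introl eq_refl) t' Ht') as Hw.
      rewrite <- (suffix_lab (GCross (LBase na) g)). exact Hw.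
    + apply win_mono with (X := Z); [|apply (HZ t HZt)].
      intros u Hu. exists Z; auto.
Qed.

Definition Hyp g S Kc := wl g /\
  (forall b, In b (nodes g) -> forall t, fsem (S b) t -> win (suffix b g) Kc t) /\
  (forall t, fsem (S LEnd) t -> Kc t).

Lemma hyp_seq : forall a g1 g2 S Kc, Hyp (GSeq a g1 g2) S Kc ->
  Hyp g1 (setEnd S (S (lab g2))) (win g2 Kc) /\ Hyp g2 S Kc /\ (exists n, a = LBase n)
  /\ (forall x, In x (nodes g1) -> ~ In x (nodes g2)).
Proof.
  intros a g1 g2 S Kc [Hwl [H1 H2]].
  destruct (wl_bin' _ _ _ Hwl) as (W1&W2&N1&N2&[na ->]&D).
  split; [|split; [|split; [eauto|auto]]].
  - split; [auto|split].
    + intros b Hb t Ht. destruct (proj2 W1 b Hb) as [nb ->]. rewrite setEnd_base in Ht.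
      change (win (GSeq aux_label (suffix (LBase nb) g1) g2) Kc t).
      rewrite <- suf_seq1 with (a := LBase na); [|auto|eapply neq_of; eauto].
      apply H1; try (simpl; rewrite in_app_iff); auto.
    + intros t Ht. unfold setEnd in Ht; simpl in Ht.
      rewrite <- (suffix_lab g2). rewrite <- suf_seq2 with (a := LBase na) (g1 := g1).
      * apply H1; [simpl; rewrite in_app_iff; right; right; apply lab_in | auto].
      * intro HH; exact (D _ HH (lab_in _)).
      * eapply neq_of; [apply lab_in | eauto].
  - split; [auto|split; auto].
    intros b Hb t' Ht'. rewrite <- suf_seq2 with (a := LBase na) (g1 := g1).
    * apply H1; try (simpl; rewrite in_app_iff); auto.
    * intro; eapply D; eauto.
    * eapply neq_of; eauto.
Qed.

Lemma hyp_ch : forall a g1 g2 S Kc, Hyp (GChoice a g1 g2) S Kc ->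
  Hyp g1 S Kc /\ Hyp g2 S Kc /\ (exists n, a = LBase n)
  /\ (forall x, In x (nodes g1) -> ~ In x (nodes g2))
  /\ (forall t, fsem (S (lab g1)) t -> win g1 Kc t)
  /\ (forall t, fsem (S (lab g2)) t -> win g2 Kc t).
Proof.
  intros a g1 g2 S Kc [Hwl [H1 H2]].
  destruct (wl_bin' _ _ _ Hwl) as (W1&W2&N1&N2&[na ->]&D).
  split; [|split; [|split; [eauto|split; [auto|split]]]].
  - split; [auto|split; auto].
    intros b Hb t Ht. rewrite <- suf_ch1 with (a := LBase na) (g2 := g2); [|auto|eapply neq_of; eauto].
    apply H1; try (simpl; rewrite in_app_iff); auto.
  - split; [auto|split; auto].
    intros b Hb t Ht. rewrite <- suf_ch2 with (a := LBase na) (g1 := g1); [| intro; eapply D; eauto |eapply neq_of; eauto].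
    apply H1; try (simpl; rewrite in_app_iff); auto.
  - intros t HS. rewrite <- (suffix_lab g1). rewrite <- suf_ch1 with (a := LBase na) (g2 := g2).
    + apply H1; [simpl; rewrite in_app_iff; right; left; apply lab_in | auto].
    + apply lab_in.
    + eapply neq_of; [apply lab_in | eauto].
  - intros t HS. rewrite <- (suffix_lab g2). rewrite <- suf_ch2 with (a := LBase na) (g1 := g1).
    + apply H1; [simpl; rewrite in_app_iff; right; right; apply lab_in | auto].
    + intro HH; exact (D _ HH (lab_in _)).
    + eapply neq_of; [apply lab_in | eauto].
Qed.

Lemma hyp_dch : forall a g1 g2 S Kc, Hyp (GDChoice a g1 g2) S Kc ->
  Hyp g1 S Kc /\ Hyp g2 S Kc /\ (exists n, a = LBase n)
  /\ (forall x, In x (nodes g1) -> ~ In x (nodes g2)).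
Proof.
  intros a g1 g2 S Kc [Hwl [H1 H2]].
  destruct (wl_bin' _ _ _ Hwl) as (W1&W2&N1&N2&[na ->]&D).
  split; [|split; [|split; [eauto|auto]]].
  - split; [auto|split; auto].
    intros b Hb t Ht. rewrite <- suf_dch1 with (a := LBase na) (g2 := g2); [|auto|eapply neq_of; eauto].
    apply H1; try (simpl; rewrite in_app_iff); auto.
  - split; [auto|split; auto].
    intros b Hb t Ht. rewrite <- suf_dch2 with (a := LBase na) (g1 := g1); [| intro; eapply D; eauto |eapply neq_of; eauto].
    apply H1; try (simpl; rewrite in_app_iff); auto.
Qed.

Lemma hyp_star : forall a g S Kc, Hyp (GStar a g) S Kc ->
  Hyp g (setEnd S (S a)) (win (GStar a g) Kc) /\ (exists n, a = LBase n) /\ ~ In a (nodes g)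
  /\ (forall t, fsem (S (lab g)) t -> win g (win (GStar a g) Kc) t).
Proof.
  intros a g S Kc [Hwl [H1 H2]].
  destruct (wl_un _ _ Hwl) as (W1&N1&[na ->]).
  split; [|split; [eauto|split; [auto|]]].
  - split; [auto|split].
    + intros b Hb t' Ht'. destruct (proj2 W1 b Hb) as [nb ->]. rewrite setEnd_base in Ht'.
      change (win (GSeq aux_label (suffix (LBase nb) g) (GStar (LBase na) g)) Kc t').
      rewrite <- suf_star; [|eapply neq_of; eauto]. apply H1; simpl; auto.
    + intros t' Ht'. unfold setEnd in Ht'; simpl in Ht'.
      pose proof (H1 (LBase na) (or_introl eq_refl) t' Ht') as Hw.
      rewrite <- (suffix_lab (GStar (LBase na) g)). exact Hw.
  - intros t HS. pose proof (H1 (lab g) (or_intror (lab_in g)) t HS) as Hw.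
    rewrite suf_star in Hw; [|eapply neq_of; [apply lab_in | eauto]].
    simpl in Hw; rewrite suffix_lab in Hw; exact Hw.
Qed.

Lemma hyp_cross : forall a g S Kc, Hyp (GCross a g) S Kc ->
  Hyp g (setEnd S (S a)) (win (GCross a g) Kc) /\ (exists n, a = LBase n) /\ ~ In a (nodes g).
Proof.
  intros a g S Kc [Hwl [H1 H2]].
  destruct (wl_un _ _ Hwl) as (W1&N1&[na ->]).
  split; [|split; [eauto|auto]].
  split; [auto|split].
  + intros b Hb t' Ht'. destruct (proj2 W1 b Hb) as [nb ->]. rewrite setEnd_base in Ht'.
    change (win (GSeq aux_label (suffix (LBase nb) g) (GCross (LBase na) g)) Kc t').
    rewrite <- suf_cross; [|eapply neq_of; eauto]. apply H1; simpl; auto.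
  + intros t' Ht'. unfold setEnd in Ht'; simpl in Ht'.
    pose proof (H1 (LBase na) (or_introl eq_refl) t' Ht') as Hw.
    rewrite <- (suffix_lab (GCross (LBase na) g)). exact Hw.
Qed.

Lemma M' : forall g S Kc, Hyp g S Kc -> forall s, win g Kc s -> win (uproj g S) Kc s.
Proof. intros g S Kc (A1&A2&A3). eapply M; eauto. Qed.


Ltac precomp := intros; simpl; destruct label_eq_dec; [congruence|];
  try (destruct in_dec; [reflexivity || tauto | reflexivity || tauto]); reflexivity.
Lemma pre_seq1 : forall b a U1 U2, b <> a -> In b (nodes U1) -> prefix b (GSeq a U1 U2) = prefix b U1.
Proof. precomp. Qed.
Lemma pre_seq2 : forall b a U1 U2, b <> a -> ~ In b (nodes U1) -> prefix b (GSeq a U1 U2) = GSeq aux_label U1 (prefix b U2).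
Proof. precomp. Qed.
Lemma pre_dch1 : forall b a U1 U2, b <> a -> In b (nodes U1) -> prefix b (GDChoice a U1 U2) = prefix b U1.
Proof. precomp. Qed.
Lemma pre_dch2 : forall b a U1 U2, b <> a -> ~ In b (nodes U1) -> prefix b (GDChoice a U1 U2) = prefix b U2.
Proof. precomp. Qed.
Lemma pre_cross : forall b a U, b <> a -> prefix b (GCross a U) = GSeq aux_label (GCross a U) (prefix b U).
Proof. precomp. Qed.
Lemma pre_seq_self : forall a U1 U2, prefix a (GSeq a U1 U2) = skip.
Proof. intros; simpl; destruct label_eq_dec; congruence. Qed.
Lemma pre_dch_self : forall a U1 U2, prefix a (GDChoice a U1 U2) = skip.
Proof. intros; simpl; destruct label_eq_dec; congruence. Qed.
Lemma pre_cross_self : forall a U, prefix a (GCross a U) = GCross a U.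
Proof. intros; simpl; destruct label_eq_dec; congruence. Qed.
Lemma suffix_self : forall g a, lab g = a -> suffix a g = g.
Proof. intros g a <-; apply suffix_lab. Qed.

Lemma star_inv : forall a g S Kc F1 F2, Hyp (GStar a g) S Kc -> forall t, win (GStar a g) Kc t ->
  win (GSeq F1 (GDTest F2 (S (lab g))) (uproj g (setEnd S (S a)))) (win (GStar a g) Kc) t.
Proof.
  intros a g S Kc F1 F2 Hy t Ht. destruct (hyp_star _ _ _ _ Hy) as (Hy1&_&_&Hl).
  simpl. intros HS. apply M'; auto.
Qed.

Lemma cross_unf : forall a g Kc t, win (GCross a g) Kc t -> Kc t /\ win g (win (GCross a g) Kc) t.
Proof.
  intros a g Kc t [Z [HZt HZ]]. destruct (HZ t HZt) as [HK HW]. split; auto.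
  apply win_mono with (X := Z); auto. intros u Hu; exists Z; auto.
Qed.

Lemma cross_inv : forall a g S Kc, Hyp (GCross a g) S Kc -> forall t, win (GCross a g) Kc t ->
  win (uproj g (setEnd S (S a))) (win (GCross a g) Kc) t.
Proof.
  intros a g S Kc Hy t Ht. destruct (hyp_cross _ _ _ _ Hy) as (Hy1&_&_).
  apply M'; auto. apply cross_unf; auto.
Qed.

Lemma L : forall g S Kc, Hyp g S Kc -> forall b, In b (nodes g) ->
  forall s, win g Kc s -> win (prefix b (uproj g S)) (win (suffix b g) Kc) s.
Proof.
  induction g; intros S Kc Hy b Hb s Hs.
  all: try (destruct (proj2 (proj1 Hy) b Hb) as [nb ->]; simpl in Hb; destruct Hb as [<-|[]];
    simpl; repeat (destruct label_eq_dec; try congruence); repeat (destruct in_dec; simpl in *; try tauto);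
    simpl; split; auto).
  -
    destruct (proj2 (proj1 Hy) b Hb) as [nb ->].
    destruct (hyp_seq _ _ _ _ _ Hy) as (Hy1&Hy2&[na ->]&D).
    destruct (label_eq_dec (LBase nb) (LBase na)) as [He|Hne].
    + rewrite He, suffix_self by reflexivity. simpl uproj. rewrite pre_seq_self. simpl; auto.
    + simpl in Hb. destruct Hb as [Hb|Hb]; [congruence|]. apply in_app_or in Hb.
      simpl uproj.
      destruct (in_dec label_eq_dec (LBase nb) (nodes g1)) as [Hb1|Hb1].
      * rewrite suf_seq1 by auto. rewrite pre_seq1 by (auto; apply uproj_nodes; auto).
        exact (IHg1 _ _ Hy1 _ Hb1 s Hs).
      * rewrite suf_seq2 by auto. rewrite pre_seq2 by (auto; rewrite uproj_nodes; auto).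
        destruct Hb as [Hb|Hb]; [tauto|].
        simpl. apply win_mono with (X := win g2 Kc).
        -- intros t Ht. apply IHg2; auto.
        -- apply M'; auto.
  -
    destruct (proj2 (proj1 Hy) b Hb) as [nb ->].
    destruct (hyp_ch _ _ _ _ _ Hy) as (Hy1&Hy2&[na ->]&D&L1&L2).
    destruct (label_eq_dec (LBase nb) (LBase na)) as [He|Hne].
    + rewrite He, suffix_self by reflexivity. simpl uproj. rewrite pre_dch_self. simpl; auto.
    + simpl in Hb. destruct Hb as [Hb|Hb]; [congruence|]. apply in_app_or in Hb.
      simpl uproj.
      destruct (in_dec label_eq_dec (LBase nb) (nodes g1)) as [Hb1|Hb1].
      * rewrite suf_ch1 by auto.
        rewrite pre_dch1 by (auto; simpl; right; right; apply uproj_nodes; auto).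
        rewrite pre_seq2 by first [discriminate | (simpl; intros [H|H]; [discriminate|exact H])].
        simpl. intros HS. apply IHg1; auto.
      * rewrite suf_ch2 by auto. destruct Hb as [Hb|Hb]; [tauto|].
        rewrite pre_dch2 by first [assumption | (simpl; intros [H|[H|H]]; [discriminate|discriminate|apply uproj_nodes in H; tauto])].
        rewrite pre_seq2 by first [discriminate | (simpl; intros [H|H]; [discriminate|exact H])].
        simpl. intros HS. apply IHg2; auto.
  -
    destruct (proj2 (proj1 Hy) b Hb) as [nb ->].
    destruct (hyp_dch _ _ _ _ _ Hy) as (Hy1&Hy2&[na ->]&D).
    destruct Hs as [Hs1 Hs2].
    destruct (label_eq_dec (LBase nb) (LBase na)) as [He|Hne].
    + rewrite He, suffix_self by reflexivity. simpl uproj. rewrite pre_dch_self. simpl; auto.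
    + simpl in Hb. destruct Hb as [Hb|Hb]; [congruence|]. apply in_app_or in Hb.
      simpl uproj.
      destruct (in_dec label_eq_dec (LBase nb) (nodes g1)) as [Hb1|Hb1].
      * rewrite suf_dch1 by auto. rewrite pre_dch1 by (auto; apply uproj_nodes; auto).
        apply IHg1; auto.
      * rewrite suf_dch2 by auto. destruct Hb as [Hb|Hb]; [tauto|].
        rewrite pre_dch2 by (auto; rewrite uproj_nodes; auto).
        apply IHg2; auto.
  -
    destruct (proj2 (proj1 Hy) b Hb) as [nb ->].
    destruct (hyp_star _ _ _ _ Hy) as (Hy1&[na ->]&N1&L1).
    simpl uproj.
    destruct (label_eq_dec (LBase nb) (LBase na)) as [He|Hne].
    + rewrite He, suffix_self by reflexivity.
      rewrite pre_seq1 by (try discriminate; simpl; auto). rewrite pre_cross_self.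
      exists (win (GStar (LBase na) g) Kc). split; [exact Hs|].
      intros t Ht. split; [exact Ht|]. apply star_inv; auto.
    + simpl in Hb. destruct Hb as [Hb|Hb]; [congruence|].
      rewrite suf_star by auto.
      rewrite pre_seq1 by (try discriminate; simpl; right; right; right; apply uproj_nodes; auto).
      rewrite pre_cross by auto.
      rewrite pre_seq2 by first [discriminate | (simpl; intros [H|H]; [discriminate|exact H])].
      exists (win (GStar (LBase na) g) Kc). split; [exact Hs|].
      intros t Ht. split.
      * intros HS. exact (IHg _ _ Hy1 _ Hb t (L1 t HS)).
      * apply star_inv; auto.
  -
    destruct (proj2 (proj1 Hy) b Hb) as [nb ->].
    destruct (hyp_cross _ _ _ _ Hy) as (Hy1&[na ->]&N1).
    simpl uproj.
    destruct (label_eq_dec (LBase nb) (LBase na)) as [He|Hne].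
    + rewrite He, suffix_self by reflexivity. rewrite pre_cross_self.
      exists (win (GCross (LBase na) g) Kc). split; [exact Hs|].
      intros t Ht. split; [exact Ht|]. eapply cross_inv; eauto.
    + simpl in Hb. destruct Hb as [Hb|Hb]; [congruence|].
      rewrite suf_cross by auto. rewrite pre_cross by auto.
      exists (win (GCross (LBase na) g) Kc). split; [exact Hs|].
      intros t Ht. split.
      * exact (IHg _ _ Hy1 _ Hb t (proj2 (cross_unf _ _ _ _ Ht))).
      * eapply cross_inv; eauto.
Qed.

Theorem mainTheorem1 (alpha : game) (phi : formula) (S : label -> formula) :
  well_labelled alpha ->
  angelic_subvalue_map alpha S ->
  compatible S phi ->
  forall b, In b (nodes alpha) ->
  forall s : state, fsem (S (lab alpha)) s ->
    fsem (FDia (prefix b (uproj alpha S)) (FDia (suffix b alpha) phi)) s.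
Proof.
  intros Hwl Hasv Hcomp b Hb s Hs.
  assert (Hy : Hyp alpha S (fsem (S LEnd))).
  { split; [exact Hwl|split; [|auto]].
    intros b' Hb' t Ht. exact (Hasv b' Hb' t Ht). }
  assert (Hw : win alpha (fsem (S LEnd)) s).
  { pose proof (Hasv (lab alpha) (lab_in alpha) s Hs) as H. simpl in H.
    rewrite suffix_lab in H. exact H. }
  pose proof (L _ _ _ Hy b Hb s Hw) as HL.
  simpl. apply win_mono with (X := win (suffix b alpha) (fsem (S LEnd))); [|exact HL].
  intros t Ht. apply win_mono with (X := fsem (S LEnd)); [|exact Ht].
  intros u Hu. exact (Hcomp u Hu).
Qed.
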